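(* Let $(X,d)$ be a compact metric space, $f:X\to X$ continuous, and $\mathcal A\subset\mathcal K(X)$ a nonempty set with the finite union property. Then $$\mathcal E(f_{\mathcal K},\mathcal A)\ge\lim_{\varepsilon\to0}\limsup_{n\to\infty}\frac{\log B(\mathcal A,n,\varepsilon)}{n}.$$
   Context: $\mathcal K(X)$ is the space of nonempty closed subsets of $X$, $f_{\mathcal K}(B)=f(B)$. $\mathcal A$ has the finite union property if $B\cup C\in\mathcal A$ for all $B,C\in\mathcal A$. $d_n(x,y)=\max_{0\le i\le n-1}d(f^ix,f^iy)$. $B,C$ are $(n,\varepsilon)$-split if $\min\{d_n(x,y):x\in B,y\in C\}>\varepsilon$; $B(\mathcal A,n,\varepsilon)$ is the maximal number of pairwise $(n,\varepsilon)$-split elements of $\mathcal A$. $A^\varepsilon_n=\{x:d_n(x,A)<\varepsilon\}$, $H^n(B,C)=\inf\{\varepsilon>0:B\subset C^\varepsilon_n,C\subset B^\varepsilon_n\}$; $N_{\mathcal K}(\mathcal Z,n,\varepsilon)$ is the smallest cardinality of $\mathcal G\subset\mathcal K(X)$ with each $B\in\mathcal Z$ within $H^n$-distance $\le\varepsilon$ of some element of $\mathcal G$; $\mathcal E(f_{\mathcal K},\mathcal Z)=\lim_{\varepsilon\to0}\limsup_n\frac{\log\log N_{\mathcal K}(\mathcal Z,n,\varepsilon)}{n}$ (convention $\log0=0$). *)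

(* Defs.v *)
From HB Require Import structures.
From mathcomp Require Import all_boot all_order all_algebra.
From mathcomp Require Import all_classical all_reals all_analysis.
Set Implicit Arguments. Unset Strict Implicit. Unset Printing Implicit Defensive.
Import Order.TTheory GRing.Theory Num.Theory.
Local Open Scope classical_set_scope.
Local Open Scope ring_scope.

Section Defs.
Context {R : realType} {X : metricType R}.
Variable f : X -> X.

Definition inK (B : set X) : Prop := closed B /\ B !=set0.

Definition dn (n : nat) (x y : X) : R :=
  \big[Num.max/0]_(i < n) mdist (iter i f x) (iter i f y).

(* B, C are (n,eps)-split: min{d_n(x,y) : x in B, y in C} > eps
   (the min is attained for nonempty closed sets in a compact space,
    so this is: every such d_n(x,y) exceeds eps) *)
Definition split (n : nat) (eps : R) (B C : set X) : Prop :=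
  forall x y, B x -> C y -> eps < dn n x y.

Definition Bnum (A : set (set X)) (n : nat) (eps : R) : \bar R :=
  ereal_sup [set ((size s)%:R)%:E | s in
    [set s : seq (set X) | (forall i, (i < size s)%N -> A (nth set0 s i)) /\
       (forall i j, (i < size s)%N -> (j < size s)%N -> i <> j ->
          split n eps (nth set0 s i) (nth set0 s j))]].

Definition dn_set (n : nat) (x : X) (A : set X) : R := inf [set dn n x y | y in A].

Definition nbhd_n (n : nat) (eps : R) (A : set X) : set X :=
  [set x | dn_set n x A < eps].

Definition Hn (n : nat) (B C : set X) : R :=
  inf [set eps : R | 0 < eps /\ B `<=` nbhd_n n eps C /\ C `<=` nbhd_n n eps B].

Definition NK (Z : set (set X)) (n : nat) (eps : R) : \bar R :=
  ereal_inf [set ((size G)%:R)%:E | G in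
    [set G : seq (set X) | (forall i, (i < size G)%N -> inK (nth set0 G i)) /\
       (forall B, Z B -> exists2 i, (i < size G)%N & Hn n B (nth set0 G i) <= eps)]].

End Defs.

(* log on extended reals, with the convention log 0 = 0 *)
Definition elog {R : realType} (x : \bar R) : \bar R :=
  match x with
  | EFin r => (if 0 < r then ln r else 0)%:E
  | +oo%E => +oo%E
  | -oo%E => 0%:E
  end.

Definition entK {R : realType} {X : metricType R} (f : X -> X) (Z : set (set X)) : \bar R :=
  lim ((fun eps : R => limn_esup (fun n : nat =>
          (elog (elog (NK f Z n eps)) * ((n%:R)^-1)%:E)%E)) @ 0^'+).

Definition splitRate {R : realType} {X : metricType R} (f : X -> X) (A : set (set X)) : \bar R :=
  lim ((fun eps : R => limn_esup (fun n : nat =>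
          (elog (Bnum f A n eps) * ((n%:R)^-1)%:E)%E)) @ 0^'+).

(* Main.v *)
Require Import Defs.
From HB Require Import structures.
From mathcomp Require Import all_boot all_order all_algebra.
From mathcomp Require Import all_classical all_reals all_analysis.
From mathcomp Require Import lra zify.
Import Order.TTheory GRing.Theory Num.Theory.
Local Open Scope classical_set_scope.
Local Open Scope ring_scope.
Set Implicit Arguments. Unset Strict Implicit. Unset Printing Implicit Defensive.

Lemma seq_bound (R : realType) (X : metricType R) (s : seq X) :
  exists M : R, 0 <= M /\ forall a b, a \in s -> b \in s -> mdist a b <= M.
Proof.
exists (\sum_(a <- s) \sum_(b <- s) mdist a b); split.
  by apply: sumr_ge0 => a _; apply: sumr_ge0 => b _; exact: mdist_ge0.
move=> a b ha hb.
apply: le_trans (_ : \sum_(b0 <- s) mdist a b0 <= _).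
  rewrite (big_rem b hb) /=.
  have : 0 <= \sum_(y <- rem b s) mdist a y by apply: sumr_ge0 => c _; exact: mdist_ge0.
  lra.
rewrite [in X in _ <= X](big_rem a ha) /=.
have : 0 <= \sum_(y <- rem a s) \sum_(b0 <- s) mdist y b0.
  by apply: sumr_ge0 => c _; apply: sumr_ge0 => d _; exact: mdist_ge0.
lra.
Qed.

Lemma compact_bound (R : realType) (X : metricType R) :
  compact [set: X] -> exists M : R, 0 <= M /\ forall x y : X, mdist x y <= M.
Proof.
move=> /compact_near_coveringP cpt.
have [x0|noX] := pselect (exists x : X, True); last first.
  by exists 0; split => // x; exfalso; apply: noX; exists x.
case: x0 => x0 _.
have := cpt R (pinfty_nbhs R) (fun M x => mdist x0 x < M) _.
case.
- move=> x _.
  have h1 : \forall x' \near x, mdist x x' < 1.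
    by have := nbhsx_ballx x (1:R) ltr01; apply: filterS => y; rewrite ballEmdist.
  near=> x' M.
  have h2 : mdist x x' < 1 by near: x'.
  have h3 : mdist x0 x + 1 < M by near: M; apply: nbhs_pinfty_gt; exact: num_real.
  have := metric_triangle x0 x x'.
  rewrite /=; lra.
- move=> M [_ hM].
  have hM' := hM (`|M| + 1) _.
  exists (2 * (`|M| + 1)); split.
    by rewrite mulr_ge0 // addr_ge0.
  move=> x y.
  have hx : mdist x0 x < `|M| + 1 by apply: hM' => //; have := ler_norm M; lra.
  have hy : mdist x0 y < `|M| + 1 by apply: hM' => //; have := ler_norm M; lra.
  have := metric_triangle x x0 y; rewrite (metric_sym x x0); lra.
Unshelve. all: by end_near.
Qed.
Section Aux.
Context {R : realType} {X : metricType R}.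
Variable f : X -> X.

Lemma dn_ge0 n x y : 0 <= dn f n x y.
Proof. rewrite /dn; elim/big_ind: _ => // [a b ha hb|i _]; [by rewrite le_max ha|exact: mdist_ge0]. Qed.

Lemma dn_le n x y (M : R) : 0 <= M -> (forall a b : X, mdist a b <= M) -> dn f n x y <= M.
Proof.
move=> M0 HM; rewrite /dn; elim/big_ind: _ => //.
by move=> a b ha hb; rewrite ge_max ha hb.
Qed.

Lemma mdist_le_dn n x y (i : 'I_n) : mdist (iter i f x) (iter i f y) <= dn f n x y.
Proof. by rewrite /dn (bigD1 i) //= le_max lexx. Qed.

Lemma dn_triangle n x y z : dn f n x z <= dn f n x y + dn f n y z.
Proof.
rewrite {1}/dn; elim/big_ind: _.
- by rewrite addr_ge0 // dn_ge0.
- by move=> a b ha hb; rewrite ge_max ha hb.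
- move=> i _; apply: le_trans (metric_triangle _ (iter i f y) _) _.
  by apply: lerD; apply: mdist_le_dn.
Qed.

Lemma dn_set_le n x (C : set X) y : C y -> dn_set f n x C <= dn f n x y.
Proof.
move=> Cy; rewrite /dn_set; apply: ge_inf; last by exists y.
by exists 0 => _ [z _ <-]; exact: dn_ge0.
Qed.

Lemma dn_set_lt n x (C : set X) c : C !=set0 -> dn_set f n x C < c ->
  exists2 y, C y & dn f n x y < c.
Proof.
move=> [y0 Cy0] /inf_lt [].
  by exists (dn f n x y0), y0.
by move=> _ [y Cy <-] h; exists y.
Qed.

Definition Hset n (B C : set X) := [set eps : R | 0 < eps /\ B `<=` nbhd_n f n eps C /\ C `<=` nbhd_n f n eps B].

Lemma Hset_ne n (B C : set X) (M : R) : 0 <= M -> (forall a b : X, mdist a b <= M) ->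
  B !=set0 -> C !=set0 -> Hset n B C !=set0.
Proof.
move=> M0 HM [b Bb] [c Cc]; exists (M + 1); split; first lra.
split => x _; rewrite /nbhd_n /=.
- apply: le_lt_trans (dn_set_le n x Cc) _.
  have := dn_le n x c M0 HM; lra.
- apply: le_lt_trans (dn_set_le n x Bb) _.
  have := dn_le n x b M0 HM; lra.
Qed.

Lemma Hn_lt n (B C : set X) (M a b : R) : 0 <= M -> (forall a b : X, mdist a b <= M) ->
  B !=set0 -> C !=set0 -> Hn f n B C <= a -> a < b ->
  exists2 e, Hset n B C e & e < b.
Proof.
move=> M0 HM Bn Cn ha ab.
have := @inf_lt _ (Hset n B C) b (Hset_ne n M0 HM Bn Cn).
rewrite /Hn; move=> /(_ (le_lt_trans ha ab)) [e he eb]; by exists e.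
Qed.

Lemma key n (e M : R) (B C g : set X) x : 0 <= M -> (forall a b : X, mdist a b <= M) ->
  0 < e -> B x -> C !=set0 -> g !=set0 ->
  Hn f n B g <= e / 3 -> Hn f n C g <= e / 3 ->
  (forall z, C z -> e < dn f n x z) -> False.
Proof.
move=> M0 HM e0 Bx Cn gn h1 h2 hs.
have lt32 : e / 3 < e / 2.
  by rewrite ltr_pM2l // ltf_pV2 // ?posrE //; lra.
have [e1 [e10 [sB _]] e1e] := Hn_lt M0 HM (ex_intro _ x Bx) gn h1 lt32.
have [e2 [e20 [_ sg]] e2e] := Hn_lt M0 HM Cn gn h2 lt32.
have [y gy xy] := dn_set_lt gn (sB x Bx).
have [z Cz yz] := dn_set_lt Cn (sg y gy).
have := hs z Cz; have := dn_triangle n x y z.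

lra.
Qed.

End Aux.
Local Close Scope classical_set_scope.
Lemma card_nonempty_sets m : #|[set I : {set 'I_m} | I != finset.set0]| = (2 ^ m - 1)%N.
Proof.
have -> : [set I : {set 'I_m} | I != finset.set0] = [set~ finset.set0].
  by by apply/finset.setP => I; rewrite !inE.
rewrite cardsC1 -cardsT -powersetT card_powerset cardsT card_ord.
by rewrite subn1.
Qed.

Local Open Scope classical_set_scope.
Section U.
Context {T : Type}.
Lemma union_closed (A : set (set T)) (s : seq (set T)) m :
  (forall B C, A B -> A C -> A (B `|` C)) ->
  (forall i, (i < m)%N -> A (nth set0 s i)) ->
  forall l : seq 'I_m, l != [::] ->
  A [set x | exists2 i, i \in l & nth set0 s i x].
Proof.
move=> hU hA; elim => [//|i l IH] _.
case: l IH => [|j l] IH.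
  have -> : [set x | exists2 i0, i0 \in [:: i] & nth set0 s i0 x] = nth set0 s i.
    apply/seteqP; split => x /=.
    - by move=> [k]; rewrite inE => /eqP ->.
    - by move=> h; exists i; rewrite ?inE.
  exact: hA.
have -> : [set x | exists2 i0, i0 \in [:: i, j & l] & nth set0 s i0 x] =
   nth set0 s i `|` [set x | exists2 i0, i0 \in [:: j & l] & nth set0 s i0 x].
  apply/seteqP; split => x /=.
  - move=> [k]; rewrite inE => /orP[/eqP ->|kl] h; [by left|by right; exists k].
  - by case => [h|[k kl h]]; [exists i; rewrite ?inE ?eqxx|exists k; rewrite // inE kl orbT].
by apply: hU; [exact: hA|exact: IH].
Qed.
End U.

Section Count.
Context {R : realType} {X : metricType R}.
Variable f : X -> X.

Lemma count_core (n : nat) (e M : R) (A : set (set X)) (s G : seq (set X)) :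
  0 <= M -> (forall a b : X, mdist a b <= M) -> 0 < e ->
  A `<=` (@inK R X) ->
  (forall B C, A B -> A C -> A (B `|` C)) ->
  (forall i, (i < size s)%N -> A (nth set0 s i)) ->
  (forall i j, (i < size s)%N -> (j < size s)%N -> i <> j ->
     Defs.split f n e (nth set0 s i) (nth set0 s j)) ->
  (forall i, (i < size G)%N -> inK (nth set0 G i)) ->
  (forall B, A B -> exists2 i, (i < size G)%N & Hn f n B (nth set0 G i) <= e / 3) ->
  (2 ^ size s - 1 <= size G)%N.
Proof.
move=> M0 HM e0 AK hU hAs hsp hG hcov.
set m := size s.
case: (posnP m) => [m0|mpos]; first by rewrite m0.
have [i0 i0G _] := hcov _ (hAs 0%N mpos).
pose j0 : 'I_(size G) := Ordinal i0G.
pose U (I : {set 'I_m}) := [set x | exists2 i : 'I_m, i \in enum I & nth set0 s i x].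
have UA : forall I : {set 'I_m}, I != finset.set0 -> A (U I).
  move=> I hI; apply: (union_closed (m:=m) hU) => //.
  case/finset.set0Pn: hI => k kI; apply/eqP => h.
  by have := mem_enum (mem I) k; rewrite h kI.
have hphi : forall I : {set 'I_m}, exists j : 'I_(size G),
    I != finset.set0 -> Hn f n (U I) (nth set0 G j) <= e / 3.
  move=> I; case: (boolP (I == finset.set0)) => hI.
    by exists j0 => h; case/negP: h.
  by have [i iG hi] := hcov _ (UA I hI); exists (Ordinal iG).
have [phi hphi'] := choice hphi.
have asym : forall (I J : {set 'I_m}) (k : 'I_m), k \in I -> k \notin J ->
    J != finset.set0 -> I != finset.set0 -> phi I = phi J -> False.
  move=> I J k kI kJ hJ hI eqphi.
  have [x sx] : nth set0 s k !=set0 := (AK _ (hAs k (ltn_ord k))).2.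
  apply: (key M0 HM e0 (B:=U I) (C:=U J) (g:=nth set0 G (phi I)) (x:=x)).
  - by exists k; rewrite ?mem_enum.
  - case/finset.set0Pn: hJ => j jJ.
    have [y sy] := (AK _ (hAs j (ltn_ord j))).2.
    by exists y, j; rewrite ?mem_enum.
  - exact: (hG _ (ltn_ord (phi I))).2.
  - exact: hphi'.
  - by rewrite eqphi; exact: hphi'.
  - move=> z [j jJ sz]; rewrite mem_enum in jJ.
    apply: (hsp k j) => //.
    move=> h; have hkj : k = j by apply: val_inj.
    by move: kJ; rewrite hkj jJ.
have inj : {in [set I : {set 'I_m} | I != finset.set0]%SET &, injective phi}.
  move=> I J; rewrite !inE => hI hJ eqIJ.
  apply/finset.setP => k.
  case kI: (k \in I); case kJ: (k \in J) => //; exfalso.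
  - by apply: (asym I J k) => //; rewrite kJ.
  - by apply: (asym J I k) => //; rewrite kI.
have := card_in_imset inj; rewrite card_nonempty_sets => <-.
by apply: leq_trans (max_card _) _; rewrite card_ord.
Qed.

End Count.
Section Int.
Context {R : realType} {T : Type}.

Lemma einf_nat (S : set T) (g : T -> nat) :
  ereal_inf [set ((g t)%:R : R)%:E | t in S] = +oo%E \/
  exists2 t, S t & ereal_inf [set ((g t)%:R : R)%:E | t in S] = ((g t)%:R)%:E.
Proof.
have [[t0 St0]|noS] := pselect (exists t, S t); last first.
  left; have -> : [set ((g t)%:R : R)%:E | t in S] = set0.
    by apply/seteqP; split => // x [t St _]; apply: noS; exists t.
  exact: ereal_inf0.
right.
pose P := fun k => `[< exists2 t, S t & g t = k >].
have exP : exists k, P k by exists (g t0); apply/asboolP; exists t0.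
case: (ex_minnP exP) => N /asboolP [t St <-] minN.
exists t => //; apply/eqP; rewrite eq_le; apply/andP; split.
  by apply: ereal_inf_lbound; exists t.
apply: le_ereal_inf_tmp => _ [t' St' <-]; rewrite lee_fin ler_nat.
by apply: minN; apply/asboolP; exists t'.
Qed.

Lemma esup_nat (S : set T) (g : T -> nat) : S !=set0 ->
  (forall b : nat, exists2 t, S t & (b < g t)%N) \/
  exists2 t, S t & ereal_sup [set ((g t)%:R : R)%:E | t in S] = ((g t)%:R)%:E.
Proof.
move=> [t0 St0].
have [ub|nub] := pselect (exists b : nat, forall t, S t -> (g t <= b)%N); last first.
  left => b; apply: contra_notP nub => h; exists b => t St.
  by rewrite leqNgt; apply/negP => hb; apply: h; exists t.
right; case: ub => b ub.
pose P := fun k => `[< exists2 t, S t & g t = k >].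
have exP : exists k, P k by exists (g t0); apply/asboolP; exists t0.
have ubP : forall k, P k -> (k <= b)%N by move=> k /asboolP [t St <-]; exact: ub.
case: (ex_maxnP exP ubP) => N /asboolP [t St <-] maxN.
exists t => //; apply/eqP; rewrite eq_le; apply/andP; split.
  apply: ge_ereal_sup => _ [t' St' <-]; rewrite lee_fin ler_nat.
  by apply: maxN; apply/asboolP; exists t'.
by apply: ereal_sup_ubound; exists t.
Qed.
End Int.

Section Num.
Context {R : realType}.
Local Open Scope ereal_scope.

Definition cc : R := (ln 2 + `|ln (ln (2:R))|)%R.

Lemma ln2_gt0 : (0 < ln (2:R))%R.
Proof. by apply: ln_gt0; lra. Qed.

Lemma cc_ge0 : (0 <= cc)%R.
Proof. rewrite /cc; have := ln2_gt0; have := normr_ge0 (ln (ln (2:R))); lra. Qed.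

Lemma psi_nat (N : nat) : elog (elog ((N%:R : R)%:E)) =
  (if (2 <= N)%N then ln (ln (N%:R : R)) else 0)%:E.
Proof.
case: N => [|[|N]] /=.
- by rewrite ltxx /= ltxx.
- by rewrite ltr01 ln1 ltxx.
have h2 : (2 <= (N.+2)%:R :> R)%R by rewrite (ler_nat R 2 N.+2).
have hp : (0 < (N.+2)%:R :> R)%R by lra.
rewrite hp /=.
have -> : (0 < ln ((N.+2)%:R : R))%R by apply: ln_gt0; lra.
by [].
Qed.

Lemma psi_lb (N : nat) : ((- cc)%R)%:E <= elog (elog ((N%:R : R)%:E)).
Proof.
rewrite psi_nat lee_fin; case: ifP => h2.
  have h : (ln (ln (2:R)) <= ln (ln (N%:R : R)))%R.
    have h2' : (2 <= N%:R :> R)%R by rewrite (ler_nat R 2 N).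
    rewrite ler_ln ?posrE ?ln2_gt0 //; last by apply: ln_gt0; lra.
    by rewrite ler_ln ?posrE //; lra.
  have hn : (- ln (ln (2:R)) <= `|ln (ln (2:R))|)%R by rewrite -normrN ler_norm.
  have := ln2_gt0; rewrite /cc; lra.
by rewrite lerNl oppr0 cc_ge0.
Qed.

Lemma psi_mono (N1 N2 : nat) : (N1 <= N2)%N ->
  elog (elog ((N1%:R : R)%:E)) <= elog (elog ((N2%:R : R)%:E)) + cc%:E.
Proof.
move=> h12.
case: (ltnP N1 2) => h1.
  rewrite [X in X <= _]psi_nat leqNgt h1 /=.
  have := leeD (psi_lb N2) (lexx (cc%:E)); rewrite -EFinD addNr.
  by [].
rewrite !psi_nat h1 (leq_trans h1 h12) -EFinD lee_fin.
have h1' : (2 <= N1%:R :> R)%R by rewrite (ler_nat R 2 N1).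
have h12' : (N1%:R <= N2%:R :> R)%R by rewrite ler_nat.
have : (ln (ln (N1%:R : R)) <= ln (ln (N2%:R : R)))%R.
  rewrite ler_ln ?posrE; [|apply: ln_gt0; lra|apply: ln_gt0; lra].
  by rewrite ler_ln ?posrE //; lra.
have := cc_ge0; lra.
Qed.

Lemma cmp_num (m N : nat) : (1 <= m)%N -> (2 ^ m - 1 <= N)%N ->
  elog ((m%:R : R)%:E) <= elog (elog ((N%:R : R)%:E)) + cc%:E.
Proof.
move=> m1 hN.
case: m m1 hN => [//|[|m]] _ hN.
  rewrite /= ltr01 ln1; have := leeD (psi_lb N) (lexx (cc%:E)); rewrite -EFinD addNr.
  by [].
have hN2 : (2 ^ m.+1 <= N)%N.
  have : (1 <= 2 ^ m.+1)%N by rewrite expn_gt0.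
  move: hN; rewrite (expnS 2 m.+1); lia.
have hN2' : (2 <= N)%N.
  by apply: leq_trans hN2; rewrite expnS leq_pmulr // expn_gt0.
rewrite psi_nat hN2' /= -EFinD lee_fin.
have pm : (0 < (m.+2)%:R :> R)%R by rewrite ltr0n.
rewrite pm.
have hm1 : (0 < (m.+1)%:R :> R)%R by rewrite ltr0n.
have e1 : (ln ((m.+2)%:R : R) <= ln 2 + ln ((m.+1)%:R : R))%R.
  rewrite -lnM ?posrE; try lra.
  rewrite ler_ln ?posrE; try lra.
  rewrite -(natrM R 2 m.+1) ler_nat; lia.
have e2 : (ln (2:R) *+ m.+1 <= ln (N%:R : R))%R.
  rewrite -lnXn; try lra.
  have hN0 : (0 < N%:R :> R)%R by rewrite ltr0n; lia.
  have h2n : (0 < (2:R) ^+ m.+1)%R by apply: exprn_gt0; lra.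
  rewrite ler_ln ?posrE //.
  by rewrite -(natrX R 2 m.+1) ler_nat.
have e3 : (ln ((m.+1)%:R : R) + ln (ln (2:R)) <= ln (ln (N%:R : R)))%R.
  have l2 : (0 < ln (2:R))%R := ln2_gt0.
  have lNp : (0 < ln (N%:R : R))%R.
    by apply: lt_le_trans e2; rewrite pmulrn_rgt0.
  rewrite -lnM ?posrE //.
  rewrite ler_ln ?posrE //; last by apply: mulr_gt0.
  by rewrite mulrC mulr_natr.
have hn : (- ln (ln (2:R)) <= `|ln (ln (2:R))|)%R by rewrite -normrN ler_norm.
rewrite /cc; lra.
Qed.

End Num.
Section Lim.
Context {R : realType}.
Local Open Scope ereal_scope.

Lemma limsup_le (a b : nat -> \bar R) (c : R) : (0 <= c)%R ->
  (forall n, a n <= b n + c%:E) ->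
  limn_esup (fun n => a n * (((n%:R : R)^-1)%R)%:E) <=
  limn_esup (fun n => b n * (((n%:R : R)^-1)%R)%:E).
Proof.
move=> c0 hab.
set x := fun n => _; set y := fun n => _.
have hxy : forall n, (0 < n)%N -> x n <= y n + (c / n%:R)%:E.
  move=> n n0; rewrite /x /y.
  have k0 : (0 <= (n%:R : R)^-1)%R by rewrite invr_ge0.
  apply: le_trans (lee_wpmul2r _ (hab n)) _; first by rewrite lee_fin.
  by rewrite muleDl ?fin_num_adde_defl // -EFinM.
rewrite /limn_esup /limf_esup.
apply: le_ereal_inf_tmp => _ [V hV <-].
apply/lee_addgt0Pr => d d0.
case: hV => N0 _ hN0.
pose N := maxn (maxn N0 1) (Num.truncn (c / d)).+1.
pose W := [set n | (N <= n)%N].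
have hW : \oo W by exists N.
apply: le_trans (ereal_inf_lbound _) _; first by exists W.
apply: ge_ereal_sup => _ [n Wn <-].
have n0 : (0 < n)%N by move: Wn; rewrite /W /N /=; lia.
apply: le_trans (hxy n n0) _.
apply: leeD.
  apply: ereal_sup_ubound; exists n => //; apply: hN0; move: Wn; rewrite /W /N /=; lia.
rewrite lee_fin.
have np : (0 < n%:R :> R)%R by rewrite ltr0n.
rewrite ler_pdivrMr //.
have h1 := truncnS_gt (c / d).
have h2 : ((Num.truncn (c / d)).+1%:R <= n%:R :> R)%R.
  by rewrite ler_nat; move: Wn; rewrite /W /N /=; lia.
have h3 : (c / d < n%:R)%R by apply: lt_le_trans h1 h2.
rewrite ltr_pdivrMr // in h3.
rewrite mulrC; lra.
Qed.

End Lim.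
Section Main.
Context {R : realType} {X : metricType R}.
Variable f : X -> X.
Local Open Scope ereal_scope.

Lemma elog_mono (x y : \bar R) : 1 <= x -> x <= y -> elog x <= elog y.
Proof.
case: x => [r| |] //; case: y => [r'| |] //=.
- move=> r1 rr'.
  have {r1} r1 : (1 <= r)%R by rewrite -lee_fin.
  have {rr'} rr' : (r <= r')%R by rewrite -lee_fin.
  have r0 : (0 < r)%R by lra.
  have r'0 : (0 < r')%R by lra.
  by rewrite r0 r'0 lee_fin ler_ln.
- by move=> _ _; exact: leey.
Qed.

Lemma Bnum_ge1 (A : set (set X)) n e B0 : A B0 -> 1 <= Bnum f A n e.
Proof.
move=> AB0; apply: le_ereal_sup_tmp; exists ((size [:: B0])%:R%:E) => //.
exists [:: B0] => //; split.
  by case => // _; exact: AB0.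
by case => [|i] [|j] // _ _.
Qed.

Lemma Bnum_anti (A : set (set X)) n e1 e2 : (e1 <= e2)%R ->
  Bnum f A n e2 <= Bnum f A n e1.
Proof.
move=> e12; apply: ereal_sup_le => _ [s [hA hs] <-]; apply: imageP; split => //.
move=> i j hi hj hij x y hx hy; exact: le_lt_trans e12 (hs i j hi hj hij x y hx hy).
Qed.

Lemma NK_anti (A : set (set X)) n e1 e2 : (e1 <= e2)%R ->
  NK f A n e2 <= NK f A n e1.
Proof.
move=> e12; apply: ereal_inf_le_tmp => _ [G [hG hc] <-]; apply: imageP; split => //.
move=> B AB; have [i iG hi] := hc B AB; exists i => //; exact: le_trans hi e12.
Qed.

Lemma Fanti (A : set (set X)) e1 e2 B0 : A B0 -> (e1 <= e2)%R ->
  limn_esup (fun n => elog (Bnum f A n e2) * (((n%:R : R)^-1)%R)%:E) <=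
  limn_esup (fun n => elog (Bnum f A n e1) * (((n%:R : R)^-1)%R)%:E).
Proof.
move=> AB0 e12; apply: (limsup_le (c := 0%R)) => // n.
rewrite adde0; apply: elog_mono; first exact: (Bnum_ge1 _ _ AB0).
exact: Bnum_anti.
Qed.

Lemma NK_nat (Z : set (set X)) n e : NK f Z n e = +oo \/ exists2 G : seq (set X),
  (forall i, (i < size G)%N -> inK (nth set0 G i)) /\
  (forall B, Z B -> exists2 i, (i < size G)%N & (Hn f n B (nth set0 G i) <= e)%R) &
  NK f Z n e = ((size G)%:R)%:E.
Proof. exact: einf_nat. Qed.

Lemma Ganti (A : set (set X)) e1 e2 : (e1 <= e2)%R ->
  limn_esup (fun n => elog (elog (NK f A n e2)) * (((n%:R : R)^-1)%R)%:E) <=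
  limn_esup (fun n => elog (elog (NK f A n e1)) * (((n%:R : R)^-1)%R)%:E).
Proof.
move=> e12; apply: (@limsup_le R _ _ cc cc_ge0) => n.
have h := NK_anti A n e12.
have [E1|[G1 _ E1]] := NK_nat A n e1.
  by rewrite E1 /= ?addye ?leey.
have [E2|[G2 _ E2]] := NK_nat A n e2.
  by move: h; rewrite E2 E1.
move: h; rewrite E2 E1 lee_fin ler_nat => h.
exact: psi_mono.
Qed.

Lemma Fcmp (A : set (set X)) (M e : R) n B0 : (0 <= M)%R ->
  (forall a b : X, (mdist a b <= M)%R) -> (0 < e)%R ->
  A `<=` (@inK R X) -> A B0 ->
  (forall B C, A B -> A C -> A (B `|` C)) ->
  elog (Bnum f A n e) <= elog (elog (NK f A n (e / 3))) + cc%:E.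
Proof.
move=> M0 HM e0 AK AB0 hU.
have ge1 := Bnum_ge1 n e AB0.
move: ge1; rewrite /Bnum.
set Bs := [set s : seq (set X) | _].
have Bsne : Bs !=set0.
  exists [:: B0]; split; first by case => // _; exact: AB0.
  by case => [|i] [|j] // _ _.
have [unb|[s [hAs hsp] Es]] := @esup_nat R _ Bs (fun s : seq (set X) => size s) Bsne.
  have [E1|[G [hG hc] E1]] := NK_nat A n (e / 3).
    by rewrite E1 /= ?addye ?leey.
  exfalso.
  have [s [hAs hsp] hs] := unb (size G).
  have := count_core M0 HM e0 AK hU hAs hsp hG hc.
  have := ltn_expl (size s) (ltnSn 1).
  lia.
rewrite Es lee_fin ler1n => s1.
have [E1|[G [hG hc] E1]] := NK_nat A n (e / 3).
  by rewrite E1 /= ?addye ?leey.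
rewrite E1; apply: cmp_num => //.
exact: count_core M0 HM e0 AK hU hAs hsp hG hc.
Qed.

End Main.

Theorem lemma4p4 (R : realType) (X : metricType R) (f : X -> X)
  (A : set (set X)) :
  compact [set: X] ->
  continuous f ->
  A `<=` (@inK R X) ->
  A !=set0 ->
  (forall B C, A B -> A C -> A (B `|` C)) ->
  (splitRate f A <= entK f A)%E.
Proof.
move=> cpt _ AK [B0 AB0] hU.
have [M [M0 HM]] := compact_bound cpt.
rewrite /splitRate /entK.
set F := fun eps : R => limn_esup _.
set G := fun eps : R => limn_esup _.
have ab : (BRight (0:R) < BInfty R false)%O by [].
have cvF := @nonincreasing_at_right_cvge R F 0 (BInfty R false) ab.
have cvG := @nonincreasing_at_right_cvge R G 0 (BInfty R false) ab.
rewrite (cvg_lim (@ereal_hausdorff R) (cvF _)); last first.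
  move=> x y; rewrite !in_itv /= !andbT => x0 y0 xy; exact: (Fanti _ AB0 xy).
rewrite (cvg_lim (@ereal_hausdorff R) (cvG _)); last first.
  move=> x y; rewrite !in_itv /= !andbT => x0 y0 xy; exact: Ganti.
apply: ge_ereal_sup => _ [e he <-].
move: he; rewrite /= in_itv /= andbT => e0.
apply: (@le_trans _ _ (G (e / 3))).
  apply: (limsup_le (c := cc)); first exact: cc_ge0.
  move=> n; exact: (Fcmp _ _ M0 HM e0 AK AB0 hU).
apply: ereal_sup_ubound; exists (e / 3) => //.
by rewrite /= in_itv /= andbT divr_gt0.
Qed.
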